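(* Let $\alpha$ be a complex parameter and let $B_n^{(\alpha)}(x)$ be the generalized Bernoulli polynomials, defined by $e^{xt}\left(\frac{t}{e^t-1}\right)^{\alpha}=\sum_{n\ge0}B_n^{(\alpha)}(x)\frac{t^n}{n!}$. For $n\ge0$ put $$T_n(\alpha)=\sum_{k=0}^{n}(-1)^k\binom{k+\alpha-1}{k}\sum_{j=0}^{k}\frac{j!\,(-1)^{k+j}}{(n+j)!}\binom{k}{j}\left\{{n+j\atop j}\right\}.$$ Then $\left(\frac{t}{e^t-1}\right)^{\alpha}=\sum_{n\ge0}T_n(\alpha)t^n$, and for every $n\ge0$, $$B_n^{(\alpha)}(x)=n!\sum_{i=0}^{n}T_i(\alpha)\frac{x^{n-i}}{(n-i)!}.$$
   Context: $\left\{{m\atop j}\right\}$ denotes the Stirling number of the second kind, with $\left\{{0\atop 0}\right\}=1$ and $\left\{{m\atop 0}\right\}=0$ for $m>0$. For complex $y$ and integer $k\ge0$, $\binom{y}{k}=\frac{y(y-1)\cdots(y-k+1)}{k!}$. The power $\left(\frac{t}{e^t-1}\right)^{\alpha}$ is the formal series $(1+h)^{-\alpha}=\sum_{k\ge0}(-1)^k\binom{k+\alpha-1}{k}h^k$ with $h=\frac{e^t-1}{t}-1$. *)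

(* Defs.v *)
From HB Require Import structures.
From mathcomp Require Import all_boot all_order all_algebra.
Set Implicit Arguments. Unset Strict Implicit. Unset Printing Implicit Defensive.
Import Order.TTheory GRing.Theory Num.Theory.
Local Open Scope ring_scope.

(* Formal power series over a ring R, represented by their coefficient
   sequences: s n = coefficient of t^n. *)
Definition fps (R : nzRingType) := nat -> R.

Definition fps_mul (R : nzRingType) (a b : fps R) : fps R :=
  fun n => \sum_(i < n.+1) a i * b (n - i)%N.

Definition fps_one (R : nzRingType) : fps R := fun n => if n == 0%N then 1 else 0.

Definition fps_pow (R : nzRingType) (a : fps R) (k : nat) : fps R :=
  iter k (fps_mul a) (@fps_one R).

Definition gbinom (F : fieldType) (y : F) (k : nat) : F :=
  (\prod_(i < k) (y - i%:R)) / (k`!)%:R.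

Fixpoint stirling2 (m j : nat) : nat :=
  match m, j with
  | 0, 0 => 1
  | 0, _.+1 => 0
  | _.+1, 0 => 0
  | m'.+1, j'.+1 => (j'.+1 * stirling2 m' j'.+1 + stirling2 m' j')%N
  end.

(* h = (e^t - 1)/t - 1 = \sum_{m >= 1} t^m/(m+1)! *)
Definition hser (F : fieldType) : fps F :=
  fun m => if m == 0%N then 0 else ((m.+1)`!%:R)^-1.

(* (t/(e^t-1))^alpha := (1+h)^{-alpha} = \sum_k (-1)^k binom(k+alpha-1,k) h^k.
   Since h has zero constant term, h^k has no terms of degree < k, so the
   coefficient of t^n only receives contributions from k <= n. *)
Definition tdiv_pow (F : fieldType) (alpha : F) : fps F :=
  fun n => \sum_(k < n.+1)
             (-1) ^+ k * gbinom (k%:R + alpha - 1) k * fps_pow (@hser F) k n.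

Definition exp_ser (F : fieldType) (x : F) : fps F :=
  fun n => x ^+ n / (n`!)%:R.

Definition genBernoulli (F : fieldType) (alpha x : F) (n : nat) : F :=
  (n`!)%:R * fps_mul (exp_ser x) (tdiv_pow alpha) n.

Definition Tcoef (F : fieldType) (alpha : F) (n : nat) : F :=
  \sum_(k < n.+1) (-1) ^+ k * gbinom (k%:R + alpha - 1) k *
    \sum_(j < k.+1) (j`!)%:R * (-1) ^+ (k + j) / ((n + j)`!)%:R
                    * ('C(k, j))%:R * (stirling2 (n + j) j)%:R.

(* Main.v *)
Require Import Defs.
From HB Require Import structures.
From mathcomp Require Import all_boot all_order all_algebra.
From mathcomp Require Import ring zify.
Import Order.TTheory GRing.Theory Num.Theory.
Local Open Scope ring_scope.

Lemma S_small a b : (a < b)%N -> stirling2 a b = 0%N.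
Proof.
elim: a b => [|a IH] [|b] //= H.
by rewrite !IH ?muln0 // ltnW.
Qed.

Lemma S_rec m j : stirling2 m.+1 j =
  (j * stirling2 m j + (if j is j'.+1 then stirling2 m j' else 0))%N.
Proof. by case: j => [|j] //=; rewrite addn0. Qed.

Arguments stirling2 : simpl never.

Lemma L M j : (\sum_(m < M.+1) 'C(M, m) * stirling2 m j)%N = stirling2 M.+1 j.+1.
Proof.
elim: M j => [|M IH] j.
  by rewrite big_ord1 bin0 mul1n S_rec /= (@S_small 0 j.+1) // muln0.
rewrite big_ord_recl.
have E : forall i : 'I_M.+1, ('C(M.+1, lift ord0 i) * stirling2 (lift ord0 i) j
     = 'C(M, i.+1) * stirling2 i.+1 j + 'C(M, i) * stirling2 i.+1 j)%N.
  by move=> i; rewrite lift0 binS mulnDl.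
rewrite (eq_bigr _ (fun i _ => E i)) big_split addnA; clear E.
have -> : ('C(M.+1, 0) * stirling2 0 j +
   \sum_(i < M.+1) 'C(M, i.+1) * stirling2 i.+1 j)%N = stirling2 M.+1 j.+1.
  rewrite -IH [in RHS]big_ord_recl [in LHS]big_ord_recr /= (@bin_small M M.+1) // mul0n addn0 !bin0.
  by [].
transitivity (stirling2 M.+1 j.+1 + \sum_(i < M.+1) 'C(M,i)*stirling2 i.+1 j)%N; first by [].
have -> : (\sum_(i < M.+1) 'C(M,i)*stirling2 i.+1 j =
   j * stirling2 M.+1 j.+1 + (if j is j'.+1 then stirling2 M.+1 j else 0))%N.
  rewrite -IH big_distrr /=.
  under eq_bigr do rewrite S_rec mulnDr.
  rewrite big_split /=; congr (_ + _)%N.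
    by apply: eq_bigr => i _; rewrite mulnCA.
  case: j => [|j]; first by rewrite big1 // => i _; rewrite muln0.
  by rewrite IH.
rewrite (S_rec M.+1 j.+1); case: j => [|j] /=; last lia.
have -> : stirling2 M.+1 0 = 0%N by []. lia.
Qed.

Lemma N1 n j : (\sum_(i < n.+1) 'C((n + j).+1, i.+1) * stirling2 (n + j - i) j)%N
   = (j.+1 * stirling2 (n + j).+1 j.+1)%N.
Proof.
have H := L (n + j).+1 j.
rewrite (S_rec (n + j).+1 j.+1) /= in H.
have R : (\sum_(m < (n+j).+2) 'C((n+j).+1, m) * stirling2 m j =
          \sum_(m < (n+j).+2) 'C((n+j).+1, m) * stirling2 ((n+j).+1 - m) j)%N.
  rewrite (reindex_inj rev_ord_inj) /=; apply: eq_bigr => i _.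
  by rewrite subSS bin_sub ?subKn // -ltnS.
rewrite R big_ord_recl subn0 bin0 mul1n in H.
have H2 : (\sum_(i < (n+j).+1) 'C((n + j).+1, i.+1) * stirling2 (n + j - i) j
   = j.+1 * stirling2 (n + j).+1 j.+1)%N.
  apply/eqP; rewrite -(eqn_add2l (stirling2 (n + j).+1 j)) [X in (_ == X)]addnC -H.
  apply/eqP; congr (_ + _)%N; apply: eq_bigr => i _; by rewrite lift0 subSS.
have Hnj : (n.+1 <= (n + j).+1)%N by rewrite ltnS leq_addr.
rewrite -H2 (@big_ord_widen nat 0%N addn n.+1 (n+j).+1 (fun i => 'C((n+j).+1, i.+1) * stirling2 (n + j - i) j)%N Hnj).
rewrite big_mkcond; apply: eq_bigr => i _; case: ifP => // /negbT.
rewrite -leqNgt => Hi; have Hi2 := ltn_ord i; rewrite S_small ?muln0 //; lia.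
Qed.

Definition gser (F : fieldType) : fps F := fun m => ((m.+1)`!%:R)^-1.

Lemma natr_fact_neq0 (F : numFieldType) m : ((m`!)%:R : F) != 0.
Proof. by rewrite pnatr_eq0 -lt0n fact_gt0. Qed.

Lemma powg (F : numFieldType) j n : fps_pow (@gser F) j n =
   (j`!)%:R * (stirling2 (n + j) j)%:R / ((n + j)`!)%:R.
Proof.
elim: j n => [|j IH] n.
  rewrite /fps_pow /= /fps_one addn0; case: n => [|n].
    by rewrite eqxx fact0 (_ : stirling2 0 0 = 1%N) // mul1r divr1.
  by rewrite (_ : stirling2 n.+1 0 = 0%N) // mulr0 mul0r.
rewrite /fps_pow iterS -/(fps_pow _ j) /fps_mul.
under eq_bigr do rewrite IH.
have E : forall i : 'I_n.+1, gser F i * ((j`!)%:R * (stirling2 (n - i + j) j)%:R / ((n - i + j)`!)%:R)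
   = (j`!)%:R / (((n + j).+1)`!)%:R * (('C((n + j).+1, i.+1) * stirling2 (n + j - i) j)%N)%:R.
  move=> i; have Hi := ltn_ord i.
  have -> : (n - i + j = n + j - i)%N by lia.
  have Hle : (i.+1 <= (n + j).+1)%N by lia.
  have b := bin_fact Hle.
  rewrite subSS in b.
  have Hc : (('C((n + j).+1, i.+1))%:R : F) != 0 by rewrite pnatr_eq0 -lt0n bin_gt0.
  have H1 := natr_fact_neq0 F i.+1.
  have H2 := natr_fact_neq0 F (n + j - i).
  rewrite /gser -b.
  move: Hc H1 H2.
  set K := 'C(_, _); set A := (i.+1)`!; set D := (n + j - i)`!; set S := stirling2 _ _.
  clearbody K A D S; rewrite !natrM => Hc Ha Hd. by field; rewrite Hc Ha Hd.
rewrite (eq_bigr _ (fun i _ => E i)) -mulr_sumr -natr_sum N1 addnS.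
have H3 := natr_fact_neq0 F (n + j).+1.
have H4 := natr_fact_neq0 F j.
move: H3 H4; rewrite (factS j).
set A := ((n + j).+1)`!; set B := j`!; set S := stirling2 _ _; clearbody A B S.
rewrite !natrM => H3 H4. by field.
Qed.

Definition tr (F : fieldType) (N : nat) (a : fps F) : {poly F} := \poly_(i < N) a i.
Arguments tr {F}.

Lemma pow_tr (F : fieldType) N (a : fps F) k n : (n < N)%N ->
  fps_pow a k n = ((tr N a) ^+ k)`_n.
Proof.
elim: k n => [|k IH] n Hn.
  by rewrite expr0 coef1 /fps_pow /= /fps_one; case: (n == 0%N).
rewrite exprS coefM /fps_pow iterS -/(fps_pow a k) /fps_mul.
apply: eq_bigr => i _; have Hi := ltn_ord i.
rewrite /tr coef_poly (_ : (i < N)%N = true); last lia.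
rewrite IH //; lia.
Qed.

Lemma trh (F : fieldType) N : (0 < N)%N -> tr N (@hser F) = tr N (@gser F) - 1.
Proof.
move=> HN; apply/polyP => i; rewrite coefB coef1 /tr !coef_poly /hser /gser.
case: i => [|i] /=; first by rewrite HN (_ : 1`! = 1%N) // invr1 subrr.
by rewrite subr0; case: ifP.
Qed.

Lemma sign_coef (F : fieldType) m (p : {poly F}) i :
  (((-1) ^+ m : {poly F}) * p)`_i = (-1) ^+ m * p`_i.
Proof.
elim: m => [|m IH]; first by rewrite !expr0 !mul1r.
by rewrite !exprS -!mulrA !mulN1r coefN IH.
Qed.

Lemma powh (F : numFieldType) k n : fps_pow (@hser F) k n =
  \sum_(j < k.+1) (-1) ^+ (k + j) * ('C(k, j))%:R * fps_pow (@gser F) j n.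
Proof.
rewrite (@pow_tr _ n.+1) // trh // -opprB exprNn exprBn mulr_sumr coef_sum.
apply: eq_bigr => j _.
rewrite expr1n mulr1 [in LHS]mulrnAr [in LHS]mulrA -exprD coefMn sign_coef -(@pow_tr _ n.+1) //.
by rewrite -[in LHS]mulr_natr mulrAC.
Qed.

Theorem mainTheorem10 (C : numClosedFieldType) (alpha : C) :
  (forall n : nat, tdiv_pow alpha n = Tcoef alpha n) /\
  (forall (n : nat) (x : C),
     genBernoulli alpha x n =
       (n`!)%:R * \sum_(i < n.+1) Tcoef alpha i * x ^+ (n - i) / ((n - i)`!)%:R).
Proof.
have P1 : forall n : nat, tdiv_pow alpha n = Tcoef alpha n.
  move=> n; rewrite /tdiv_pow /Tcoef; apply: eq_bigr => k _; congr (_ * _).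
  rewrite powh; apply: eq_bigr => j _; rewrite powg.
  by rewrite mulrA mulrC !mulrA [in RHS]mulrC !mulrA; ring.
split=> // n x.
rewrite /genBernoulli; congr (_ * _); rewrite /fps_mul.
rewrite [RHS](reindex_inj rev_ord_inj) /=; apply: eq_bigr => i _.
have Hi := ltn_ord i.
rewrite subSS subKn ?P1 /exp_ser; last lia.
by rewrite mulrC mulrA.
Qed.
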